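(* Let $f_1,\dots,f_N:\mathbb{R}^n\to\mathbb{R}$ satisfy the standing assumptions below, let $\Phi(x)=\max_{1\le j\le N}f_j(x)$, let $x_k\in\mathbb{R}^n$, let $G\in\mathbb{R}^{N\times n}$ be the matrix whose $j$-th row is $\nabla f_j(x_k)^T$, and let $f=(f_1(x_k),\dots,f_N(x_k))^T$. If $\lambda$ is a solution of $$\min_{\lambda}\left(\tfrac12\lambda^TGG^T\lambda-f^T\lambda\right)\quad\text{s.t.}\quad \sum_{i=1}^N\lambda_i=1,\ \lambda_i\ge 0,$$ and $p=-G^T\lambda$, then $\Phi'(x_k;p)\le -\tfrac12\|p\|^2$.
   Context: Standing assumptions: (H1) there is $M\in\mathbb{R}$ with $f_j(x)\ge M$ for all $x$ and $j$; (H2) each $f_j\in C^1(\mathbb{R}^n)$ and there is a modulus of continuity $w$ (increasing $w:[0,\infty)\to[0,\infty)$, $w(0)=0$, continuous at $0$) with $\|\nabla f_j(x)-\nabla f_j(y)\|\le w(\|x-y\|)$ for all $x,y$ and $j$. For $g:\mathbb{R}^n\to\mathbb{R}$, the directional derivative is $g'(x;d)=\lim_{t\to0^+}\frac{g(x+td)-g(x)}{t}$ (for $\Phi$ this limit exists for every $x,d$). *)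

(* Defs.v *)
From mathcomp Require Import all_boot all_order all_algebra.
From mathcomp Require Import all_classical all_reals all_analysis.
Set Implicit Arguments. Unset Strict Implicit. Unset Printing Implicit Defensive.
Import Order.TTheory GRing.Theory Num.Theory.
Import numFieldNormedType.Exports.
Local Open Scope classical_set_scope.
Local Open Scope ring_scope.

Definition dotv {R : realType} {n : nat} (u v : 'cV[R]_n) : R :=
  \sum_(i < n) u i 0 * v i 0.
Definition sqnorm {R : realType} {n : nat} (v : 'cV[R]_n) : R := dotv v v.
Definition enorm {R : realType} {n : nat} (v : 'cV[R]_n) : R :=
  Num.sqrt (sqnorm v).

Definition grad {R : realType} {n : nat} (f : 'cV[R]_n -> R) (x : 'cV[R]_n)
  : 'cV[R]_n := \col_(i < n) ('d f x (delta_mx i 0 : 'cV[R]_n)).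

Definition modulus_of_continuity {R : realType} (w : R -> R) : Prop :=
  (forall a b, 0 <= a -> a <= b -> w a <= w b) /\ w 0 = 0 /\
  (forall a, 0 <= a -> 0 <= w a) /\
  (w t @[t --> 0^'+] --> 0).

Definition Phi {R : realType} {n N : nat} (f : 'I_N.+1 -> 'cV[R]_n -> R)
  (x : 'cV[R]_n) : R :=
  \big[Num.max/f ord0 x]_(j < N.+1) f j x.

Definition has_dirder {R : realType} {n : nat} (g : 'cV[R]_n -> R)
  (x d : 'cV[R]_n) (L : R) : Prop :=
  ((g (x + t *: d) - g x) / t) @[t --> 0^'+] --> L.

Definition simplex {R : realType} {N : nat} (l : 'cV[R]_N) : Prop :=
  \sum_(i < N) l i 0 = 1 /\ forall i, 0 <= l i 0.

Definition qp_obj {R : realType} {N n : nat} (G : 'M[R]_(N, n))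
  (fv l : 'cV[R]_N) : R :=
  2^-1 * (l^T *m G *m G^T *m l) 0 0 - dotv fv l.

(* Main.v *)
Require Import Defs.
From mathcomp Require Import all_boot all_order all_algebra.
From mathcomp Require Import all_classical all_reals all_analysis.
From mathcomp Require Import ring lra.
Import Order.TTheory GRing.Theory Num.Theory.
Import numFieldNormedType.Exports.
Local Open Scope classical_set_scope.
Local Open Scope ring_scope.

Section S.
Context {R : realType}.

Lemma near_dn_right (P : R -> Prop) :
  (\forall t \near 0^', P t) -> \forall t \near 0^'+, P t.
Proof.
rewrite !near_withinE => H; apply: filterS H => t H tp.
apply: H; rewrite /= gt_eqF //.
Qed.

Lemma dq (n : nat) (f : 'cV[R]_n -> R) x p : differentiable f x ->
  ((f (x + t *: p) - f x) / t) @[t --> 0^'+] --> 'd f x p.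
Proof.
move=> Hd.
have H : (fun h : R => h^-1 *: ((f \o shift x) (h *: p) - f x)) @ 0^' --> 'D_p f x.
  exact: (@diff_derivable _ _ _ f x p Hd).
rewrite deriveE // in H.
move=> A /H HA. 
have HA' : \forall t \near 0^'+, A (t^-1 *: ((f \o shift x) (t *: p) - f x)).
  by apply: near_dn_right; exact: HA.
apply: filterS HA' => t /=.
by rewrite [x + _]addrC [_ / t]mulrC.
Qed.

Lemma d_grad (n : nat) (f : 'cV[R]_n -> R) x p :
  'd f x p = \sum_(i < n) grad f x i 0 * p i 0.
Proof.
rewrite {1}(matrix_sum_delta p) linear_sum; apply: eq_bigr => i _.
rewrite big_ord1 linearZ /= /grad mxE mulrC.
by [].
Qed.


Lemma bigmax_ge (I : eqType) (s : seq I) (F : I -> R) x0 j :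
  j \in s -> F j <= \big[Num.max/x0]_(i <- s) F i.
Proof.
elim: s => //= a s IH; rewrite in_cons big_cons => /orP[/eqP->|/IH H].
  by rewrite le_max lexx.
by rewrite le_max H orbT.
Qed.

Lemma Phi_ge (n N : nat) (f : 'I_N.+1 -> 'cV[R]_n -> R) j x : f j x <= Phi f x.
Proof. by apply: bigmax_ge; rewrite mem_index_enum. Qed.

Lemma Phi_ex (n N : nat) (f : 'I_N.+1 -> 'cV[R]_n -> R) x : exists j, Phi f x = f j x.
Proof.
rewrite /Phi; elim/big_ind: _.
- by exists ord0.
- move=> a b [ja ->] [jb ->]; case: leP => _; [by exists jb | by exists ja].
- by move=> i _; exists i.
Qed.

Lemma Phi_le (n N : nat) (f : 'I_N.+1 -> 'cV[R]_n -> R) x c :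
  (forall j, f j x <= c) -> Phi f x <= c.
Proof.
move=> H; rewrite /Phi; elim/big_ind: _ => //.
by move=> a b ha hb; rewrite ge_max ha hb.
Qed.

Lemma quad (a c : R) : 0 <= c -> (forall t, 0 < t -> t <= 1 -> 0 <= t * a + t ^+ 2 * c) -> 0 <= a.
Proof.
move=> hc H; rewrite leNgt; apply/negP => ha.
have hca : 0 < c - a by lra.
pose t := - a / (c - a).
have ht : t * (c - a) = - a by rewrite /t mulfVK // gt_eqF.
have t0 : 0 < t by rewrite /t divr_gt0 // oppr_gt0.
have t1 : t <= 1 by rewrite /t ler_pdivrMr // mul1r; lra.
have := H t t0 t1.
have -> : t * a + t ^+ 2 * c = t ^+ 2 * a.
  have : t * c = t * a - a by rewrite -[t * c](subrK (t * a)) -mulrBr ht; ring.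
  move=> e; rewrite expr2 -mulrA e; ring.
by rewrite leNgt pmulr_rlt0 ?exprn_gt0 // ha.
Qed.

Lemma dotvDZ (n : nat) (v w : 'cV[R]_n) t :
  dotv (v + t *: w) (v + t *: w) = dotv v v + 2 * t * dotv v w + t ^+ 2 * dotv w w.
Proof.
rewrite /dotv !mulr_sumr -!big_split /=; apply: eq_bigr => i _; rewrite !mxE; ring.
Qed.

Lemma dotvDZr (n : nat) (v w u : 'cV[R]_n) t :
  dotv u (v + t *: w) = dotv u v + t * dotv u w.
Proof.
rewrite /dotv !mulr_sumr -!big_split /=; apply: eq_bigr => i _; rewrite !mxE; ring.
Qed.

Lemma dotvBr (n : nat) (v w u : 'cV[R]_n) :
  dotv u (v - w) = dotv u v - dotv u w.
Proof.
rewrite /dotv -sumrB; apply: eq_bigr => i _; rewrite !mxE; ring.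
Qed.

Lemma dotv_delta (n : nat) (u : 'cV[R]_n.+1) j : dotv u (delta_mx j 0) = u j 0.
Proof.
rewrite /dotv (bigD1 j) //= big1 ?addr0; first by rewrite mxE !eqxx mulr1.
by move=> i /negPf hi; rewrite mxE hi mulr0.
Qed.

Lemma sum_delta (n : nat) (j : 'I_n.+1) : \sum_i (delta_mx j 0 : 'cV[R]_n.+1) i 0 = 1.
Proof.
rewrite (bigD1 j) //= big1 ?addr0; first by rewrite mxE !eqxx.
by move=> i /negPf hi; rewrite mxE hi.
Qed.

Lemma dotv_ge0 (n : nat) (v : 'cV[R]_n) : 0 <= dotv v v.
Proof. by apply: sumr_ge0 => i _; rewrite -expr2 sqr_ge0. Qed.

Lemma qp_dot (N n : nat) (G : 'M[R]_(N, n)) fv l :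
  qp_obj G fv l = 2^-1 * dotv (G^T *m l) (G^T *m l) - dotv fv l.
Proof.
rewrite /qp_obj -mulmxA -[l^T *m G](trmxK) trmx_mul trmxK !mxE /dotv.
by congr (_ * _ - _); apply: eq_bigr => i _; rewrite !mxE.
Qed.


Lemma qp_key (N n : nat) (G : 'M[R]_(N.+1, n)) (fv lam : 'cV[R]_N.+1) :
  simplex lam -> (forall mu, simplex mu -> qp_obj G fv lam <= qp_obj G fv mu) ->
  forall j, dotv (G^T *m lam) (G^T *m lam) + fv j 0 - dotv fv lam
            <= (G *m (G^T *m lam)) j 0.
Proof.
move=> [s1 s0] Hopt j.
set v := G^T *m lam.
set d := delta_mx j 0 - lam.
set w := G^T *m d.
have Hq : 0 <= (dotv v w - dotv fv d).
  apply: (@quad _ (2^-1 * dotv w w)).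
    by apply: mulr_ge0; [lra | exact: dotv_ge0].
  move=> t t0 t1.
  have Hs : simplex (lam + t *: d).
    split.
      under eq_bigr => i _ do rewrite !mxE.
      rewrite big_split /= -mulr_sumr sumrB s1.
      have -> : \sum_(i < N.+1) ((i == j) && ((0 : 'I_1) == 0))%:R = 1 :> R.
        by rewrite -[RHS](sum_delta N j); apply: eq_bigr => i _; rewrite mxE.
      ring.
    move=> i; rewrite !mxE.
    have := s0 i.
    have : 0 <= ((i == j) && true)%:R :> R by rewrite ler0n.
    nra.
  have := Hopt _ Hs.
  rewrite !qp_dot mulmxDr -scalemxAr dotvDZ dotvDZr -/v -/w.
  lra.
move: Hq; rewrite /w /d mulmxBr dotvBr -/v dotvBr dotv_delta.
have -> : dotv v (G^T *m delta_mx j 0) = (G *m v) j 0.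
  rewrite -colE /dotv mxE; apply: eq_bigr => i _; rewrite !mxE mulrC.
  by [].
lra.
Qed.

End S.

Theorem theorem2 (R : realType) (n N : nat)
  (f : 'I_N.+1 -> 'cV[R]_n -> R) (M : R) (w : R -> R)
  (H1 : forall j x, M <= f j x)
  (Hdiff : forall j x, differentiable (f j) x)
  (Hw : modulus_of_continuity w)
  (H2 : forall j x y, enorm (grad (f j) x - grad (f j) y) <= w (enorm (x - y)))
  (xk : 'cV[R]_n) (lam : 'cV[R]_N.+1) :
  let G : 'M[R]_(N.+1, n) := \matrix_(j < N.+1, i < n) grad (f j) xk i 0 in
  let fv : 'cV[R]_N.+1 := \col_(j < N.+1) f j xk in
  simplex lam ->
  (forall mu : 'cV[R]_N.+1, simplex mu -> qp_obj G fv lam <= qp_obj G fv mu) ->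
  let p : 'cV[R]_n := - (G^T *m lam) in
  exists L : R, has_dirder (Phi f) xk p L /\ L <= - (2^-1 * sqnorm p).
Proof.
move=> G fv Hs Hopt p.
have Hkey := qp_key _ _ _ _ _ Hs Hopt.
case: Hs => s1 s0.
set v := G^T *m lam in Hkey.
pose D j := 'd (f j) xk p.
have HD : forall j, D j = - (G *m v) j 0.
  move=> j; rewrite /D d_grad mxE -sumrN; apply: eq_bigr => i _.
  by rewrite /p /G !mxE mulrN.
have sqp : sqnorm p = dotv v v.
  by rewrite /sqnorm /dotv; apply: eq_bigr => i _; rewrite /p !mxE mulrNN.
have fl : dotv fv lam <= Phi f xk.
  rewrite -[Phi f xk]mulr1 -s1 mulr_sumr /dotv; apply: ler_sum => i _.
  by rewrite /fv mxE; apply: ler_wpM2r; [exact: s0 | exact: Phi_ge].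
have Dact : forall j, f j xk = Phi f xk -> D j <= - (2^-1 * sqnorm p).
  move=> j hj; have := Hkey j; rewrite HD sqp /fv mxE hj.
  have := dotv_ge0 _ v; lra.
have [j0 hj0] := Phi_ex _ _ f xk.
have Pj0 : (fun j => f j xk == Phi f xk) j0 by rewrite /= hj0.
case: (@arg_maxP _ _ _ j0 [pred j | f j xk == Phi f xk] (fun j => D j) Pj0) => js /= /eqP Pjs Hmax.
exists (D js); split; last by apply: Dact.
rewrite /has_dirder; apply/cvgrPdist_le => e e0.
have Hall : \forall t \near 0^'+, forall j, f j (xk + t *: p) <= Phi f xk + t * (D js + e).
  apply: filter_forall => j.
  pose c := if f j xk < Phi f xk then (Phi f xk - f j xk) / (`|D j - D js| + 1) else 1.
  have c0 : 0 < c.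
    rewrite /c; case: ifP => h //.
    by apply: divr_gt0; [rewrite subr_gt0 | rewrite ltr_wpDl].
  near=> t.
  have t0 : 0 < t by near: t; exact: nbhs_right_gt.
  have tc : t < c by near: t; exact: nbhs_right_lt.
  have hq : `|D j - (f j (xk + t *: p) - f j xk) / t| <= e.
    by near: t; move/cvgrPdist_le: (dq _ _ _ p (Hdiff j xk)); apply.
  move: hq; rewrite ler_norml => /andP [hq _].
  have hX : f j (xk + t *: p) - f j xk <= (D j + e) * t.
    by rewrite -ler_pdivrMr //; lra.
  move: tc; rewrite /c; case: ifP => h tc.
    have hz : 0 < `|D j - D js| + 1 by have := normr_ge0 (D j - D js); lra.
    move: tc; rewrite ltr_pdivlMr // => tc.
    have : t * (D j - D js) <= t * `|D j - D js|.
      by apply: ler_wpM2l; [lra | exact: ler_norm].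
    nra.
  have hj : f j xk = Phi f xk.
    by apply/eqP; rewrite eq_le Phi_ge /= leNgt h.
  have : D j <= D js by apply: Hmax => /=; rewrite hj.
  nra.
near=> t.
have t0 : 0 < t by near: t; exact: nbhs_right_gt.
have hl : `|D js - (f js (xk + t *: p) - f js xk) / t| <= e.
  by near: t; move/cvgrPdist_le: (dq _ _ _ p (Hdiff js xk)); apply.
have hu : forall j, f j (xk + t *: p) <= Phi f xk + t * (D js + e).
  by near: t; exact: Hall.
have hP := Phi_le _ _ _ _ _ hu.
have hB : (f js (xk + t *: p) - f js xk) / t <= (Phi f (xk + t *: p) - Phi f xk) / t.
  by apply: ler_wpM2r; [rewrite invr_ge0; lra | rewrite Pjs lerD2r Phi_ge].
move: hl; rewrite !ler_norml => /andP [hl1 hl2].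
apply/andP; split.
  have : (Phi f (xk + t *: p) - Phi f xk) / t <= D js + e.
    by rewrite ler_pdivrMr //; lra.
  lra.
lra.
Unshelve. all: by end_near.
Qed.
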